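(* Let $\mathcal U$ be a balanced critical update family, $\alpha=\alpha(\mathcal U)$, and $\mathcal S_B$, $\rho$ as in the context. Let $D$ be an $\mathcal S_B$-droplet and let $Y\subset\mathbb Z^2$ have $|Y|\le\alpha-1$. Then $\|x-Y\|\le\rho$ for every $x\in[D\cup Y]\setminus D$.
   Context: Update family $\mathcal U$: finite collection of finite subsets of $\mathbb Z^2\setminus\{0\}$, $A_{t+1}=A_t\cup\{x:x+X\subset A_t,\ X\in\mathcal U\}$, $[A]=\bigcup_tA_t$. $\mathbb H_u=\{x\in\mathbb Z^2:\langle x,u\rangle<0\}$, $\mathbb H_u(a)=\{x\in\mathbb Z^2:\langle x-a,u\rangle<0\}$; $u$ stable if $[\mathbb H_u]=\mathbb H_u$. For rational $u$, $\ell_u=\{x:\langle x,u\rangle=0\}$, $\ell_u^\pm$ = origin plus sites of $\ell_u$ right/left of the origin looking in direction $u$, $\alpha^\pm(u)$ = minimal $|Z|$ with $[\mathbb H_u\cup Z]\cap\ell_u^\pm$ infinite, $\bar\alpha(u)=\min\{\alpha^+(u),\alpha^-(u)\}$; $\alpha(u)=\bar\alpha(u)$ if both are finite, else $\infty$; $\alpha(\mathcal U)=\min_C\sup_{u\in C}\alpha(u)$ over open semicircles. Critical and balanced: $1\le\alpha(\mathcal U)<\infty$ and there is a closed semicircle on which $\alpha(u)\le\alpha(\mathcal U)$. $\mathcal S_B$ is a fixed finite set of stable directions with $\bar\alpha(u)\ge\alpha$ for all $u\in\mathcal S_B$ and meeting every open semicircle. For $\mathcal T\subset S^1$ a $\mathcal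 T$-droplet is a non-empty set $\bigcap_{u\in\mathcal T}\mathbb H_u(a_u)$ with $a_u\in\mathbb Z^2$. $\rho:=\max\{\|y-Z\|: u\in\mathcal S_B,\ Z\subset\mathbb Z^2,\ |Z|=\alpha-1,\ y\in[\mathbb H_u\cup Z]\setminus\mathbb H_u\}$ (finite), where $\|x-Y\|=\min_{y\in Y}\|x-y\|$ is Euclidean. *)

(* Defs.v *)
From Stdlib Require Import Reals ZArith List.
Import ListNotations.
Open Scope R_scope.

Definition point : Type := (Z * Z)%type.
Definition pset : Type := point -> Prop.
Definition dir : Type := (R * R)%type.

Definition padd (x y : point) : point := (fst x + fst y, snd x + snd y)%Z.
Definition psub (x y : point) : point := (fst x - fst y, snd x - snd y)%Z.

Definition update_family (U : list (list point)) : Prop :=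
  forall X, In X U -> ~ In (0%Z, 0%Z) X.

Definition step (U : list (list point)) (A : pset) : pset :=
  fun x => A x \/ exists X, In X U /\ forall y, In y X -> A (padd x y).

Fixpoint iterA (U : list (list point)) (A : pset) (t : nat) : pset :=
  match t with
  | O => A
  | S t' => step U (iterA U A t')
  end.

Definition closure (U : list (list point)) (A : pset) : pset :=
  fun x => exists t, iterA U A t x.

Definition union (A B : pset) : pset := fun x => A x \/ B x.
Definition inter (A B : pset) : pset := fun x => A x /\ B x.
Definition of_list (Z : list point) : pset := fun x => In x Z.

Definition unit_dir (u : dir) : Prop := fst u ^ 2 + snd u ^ 2 = 1.

Definition ip (x : point) (u : dir) : R := IZR (fst x) * fst u + IZR (snd x) * snd u.
Definition ipR (v w : dir) : R := fst v * fst w + snd v * snd w.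

Definition H (u : dir) : pset := fun x => ip x u < 0.
Definition Ha (u : dir) (a : point) : pset := fun x => ip (psub x a) u < 0.

Definition stable (U : list (list point)) (u : dir) : Prop :=
  forall x, closure U (H u) x <-> H u x.

Definition rational_dir (u : dir) : Prop :=
  exists (p q : Z) (c : R), (p <> 0%Z \/ q <> 0%Z) /\ 0 < c /\
    u = (c * IZR p, c * IZR q).

(* ℓ_u, and ℓ_u^+ / ℓ_u^- : origin plus the sites of ℓ_u to the right / left
   of the origin looking in direction u (right = direction (u2,-u1)). *)
Definition ell (u : dir) : pset := fun x => ip x u = 0.
Definition ell_side (plus : bool) (u : dir) : pset :=
  fun x => ell u x /\
    (if plus then 0 <= ip x (snd u, - fst u) else ip x (snd u, - fst u) <= 0).

Definition finite_set (S : pset) : Prop := exists l : list point, forall x, S x -> In x l.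
Definition infinite_set (S : pset) : Prop := ~ finite_set S.

(* alpha^{±}(u) <= n  (i.e. some Z with |Z| <= n makes [H_u ∪ Z] ∩ ℓ_u^± infinite).
   A list of length <= n represents a set of cardinality <= n. *)
Definition alpha_pm_le (U : list (list point)) (plus : bool) (u : dir) (n : nat) : Prop :=
  exists Z : list point, (length Z <= n)%nat /\
    infinite_set (inter (closure U (union (H u) (of_list Z))) (ell_side plus u)).

(* alphabar(u) = min(alpha^+(u), alpha^-(u)) <= n *)
Definition alphabar_le (U : list (list point)) (u : dir) (n : nat) : Prop :=
  alpha_pm_le U true u n \/ alpha_pm_le U false u n.

(* alpha(u) <= n : alpha(u) = alphabar(u) if both alpha^± finite, else ∞ *)
Definition alpha_le (U : list (list point)) (u : dir) (n : nat) : Prop :=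
  (exists m, alpha_pm_le U true u m) /\ (exists m, alpha_pm_le U false u m) /\
  alphabar_le U u n.

Definition in_open_semicircle (w u : dir) : Prop := unit_dir u /\ ipR u w > 0.
Definition in_closed_semicircle (w u : dir) : Prop := unit_dir u /\ ipR u w >= 0.

Definition sup_alpha_le (U : list (list point)) (w : dir) (n : nat) : Prop :=
  forall u, in_open_semicircle w u -> rational_dir u -> alpha_le U u n.

(* alpha(U) = a, where alpha(U) = min_C sup_{u∈C} alpha(u) (extended naturals) *)
Definition alphaU_eq (U : list (list point)) (a : nat) : Prop :=
  (exists w, unit_dir w /\ sup_alpha_le U w a) /\
  (forall w m, unit_dir w -> sup_alpha_le U w m -> (a <= m)%nat).

Definition critical_balanced (U : list (list point)) (a : nat) : Prop :=
  alphaU_eq U a /\ (1 <= a)%nat /\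
  exists w, unit_dir w /\
    forall u, in_closed_semicircle w u -> rational_dir u -> alpha_le U u a.

Definition SB_ok (U : list (list point)) (a : nat) (SB : list dir) : Prop :=
  (forall u, In u SB -> unit_dir u /\ stable U u /\
      (forall m, alphabar_le U u m -> (a <= m)%nat)) /\
  (forall w, unit_dir w -> exists u, In u SB /\ in_open_semicircle w u).

Definition pdist (x y : point) : R :=
  sqrt (IZR (fst x - fst y) ^ 2 + IZR (snd x - snd y) ^ 2).

Definition is_min_dist (x : point) (Y : list point) (d : R) : Prop :=
  (exists y, In y Y /\ pdist x y = d) /\ (forall y, In y Y -> d <= pdist x y).

(* ||x - Y|| <= r  (false for Y empty, where ||x - Y|| = +∞) *)
Definition dist_le (x : point) (Y : list point) (r : R) : Prop :=
  exists y, In y Y /\ pdist x y <= r.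

Definition rho_set (U : list (list point)) (a : nat) (SB : list dir) (d : R) : Prop :=
  exists u Z y, In u SB /\ NoDup Z /\ length Z = (a - 1)%nat /\
    closure U (union (H u) (of_list Z)) y /\ ~ H u y /\ is_min_dist y Z d.

Definition is_rho (U : list (list point)) (a : nat) (SB : list dir) (rho : R) : Prop :=
  ((exists d, rho_set U a SB d) -> rho_set U a SB rho) /\
  forall d, rho_set U a SB d -> d <= rho.

Definition droplet (SB : list dir) (aa : dir -> point) : pset :=
  fun x => forall u, In u SB -> Ha u (aa u) x.

(* Main.v *)
Require Import Defs.
From Stdlib Require Import Reals ZArith List Lia Lra Classical.
Import ListNotations.
Open Scope R_scope.

Lemma iter_mono U (A B : pset) : (forall z, A z -> B z) ->
  forall t x, iterA U A t x -> iterA U B t x.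
Proof.
  intros HAB t; induction t as [|t IH]; simpl; intros x Hx; auto.
  destruct Hx as [Hx|[X [HX Hy]]]; [left; auto | right; exists X; split; auto].
Qed.

Lemma clos_mono U (A B : pset) : (forall z, A z -> B z) ->
  forall x, closure U A x -> closure U B x.
Proof. intros HAB x [t Ht]; exists t; eapply iter_mono; eauto. Qed.

Lemma psub_padd x y a : psub (padd x y) a = padd (psub x a) y.
Proof. unfold psub, padd; simpl; f_equal; ring. Qed.

Lemma iter_trans U (B : pset) a : forall t x,
  iterA U (fun z => B (psub z a)) t x -> iterA U B t (psub x a).
Proof.
  intro t; induction t as [|t IH]; simpl; intros x Hx; auto.
  destruct Hx as [Hx|[X [HX Hy]]]; [left; auto | right; exists X; split; auto].
  intros y Hy'. rewrite <- psub_padd. apply IH; auto.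
Qed.

Lemma pdist_trans x y a : pdist (psub x a) (psub y a) = pdist x y.
Proof.
  unfold pdist, psub; simpl.
  replace (fst x - fst a - (fst y - fst a))%Z with (fst x - fst y)%Z by ring.
  replace (snd x - snd a - (snd y - snd a))%Z with (snd x - snd y)%Z by ring.
  reflexivity.
Qed.

Lemma exists_min (f : point -> R) (l : list point) : l <> [] ->
  exists z, In z l /\ forall y, In y l -> f z <= f y.
Proof.
  induction l as [|b l IH]; intros Hne; [congruence|].
  destruct l as [|c l'].
  - exists b; split; [left; auto|]. intros y [<-|[]]; lra.
  - destruct IH as [z [Hz Hm]]; [discriminate|].
    destruct (Rle_dec (f b) (f z)).
    + exists b; split; [left; auto|]. intros y [<-|Hy]; [lra|]. specialize (Hm y Hy); lra.
    + exists z; split; [right; auto|]. intros y [<-|Hy]; [lra| auto].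
Qed.

Fixpoint zsum (f : point -> Z) (l : list point) : Z :=
  match l with [] => 0%Z | b :: l' => (f b + zsum f l')%Z end.

Lemma zsum_ge f l : (forall y, (0 <= f y)%Z) -> forall y, In y l -> (f y <= zsum f l)%Z.
Proof.
  intros Hf y; induction l as [|b l IH]; simpl; [tauto|].
  intros [<-|Hy]. - assert (0 <= zsum f l)%Z.
  { clear IH. induction l as [|d l IHl]; simpl; [lia|]. specialize (Hf d). lia. }
    specialize (Hf b). lia.
  - specialize (IH Hy). specialize (Hf b). lia.
Qed.

Lemma sq_le (A B C D : Z) : (A*A + B*B <= C*C + D*D)%Z ->
  sqrt (IZR A ^ 2 + IZR B ^ 2) <= sqrt (IZR C ^ 2 + IZR D ^ 2).
Proof.
  intro H0. apply sqrt_le_1_alt.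
  replace (IZR A ^ 2 + IZR B ^ 2) with (IZR (A*A + B*B)) by (rewrite plus_IZR, !mult_IZR; ring).
  replace (IZR C ^ 2 + IZR D ^ 2) with (IZR (C*C + D*D)) by (rewrite plus_IZR, !mult_IZR; ring).
  apply IZR_le; auto.
Qed.

Lemma far (dx dy M : Z) : (Z.abs dx + Z.abs dy <= M)%Z -> (dx*dx+dy*dy <= M*M)%Z.
Proof.
  intro Hm.
  assert (Z.abs dx * Z.abs dx = dx * dx)%Z by (destruct (Z.abs_spec dx) as [[_ ->]|[_ ->]]; ring).
  assert (Z.abs dy * Z.abs dy = dy * dy)%Z by (destruct (Z.abs_spec dy) as [[_ ->]|[_ ->]]; ring).
  assert (0 <= Z.abs dx)%Z by lia. assert (0 <= Z.abs dy)%Z by lia.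
  assert ((Z.abs dx + Z.abs dy) * (Z.abs dx + Z.abs dy) <= M * M)%Z by (apply Z.mul_le_mono_nonneg; lia).
  nia.
Qed.

Theorem mainTheorem8 (U : list (list point)) (a : nat) (SB : list dir) (rho : R)
  (aa : dir -> point) (Y : list point) :
  update_family U ->
  critical_balanced U a ->
  SB_ok U a SB ->
  is_rho U a SB rho ->
  (exists x0, droplet SB aa x0) ->
  NoDup Y -> (length Y <= a - 1)%nat ->
  forall x, closure U (union (droplet SB aa) (of_list Y)) x ->
            ~ droplet SB aa x ->
            dist_le x Y rho.
Proof.
  intros _ _ [HSB _] [_ Hrho] _ HND Hlen x Hcl Hnd.
  assert (exists u, In u SB /\ ~ Ha u (aa u) x) as [u [Hu Hnu]].
  { apply NNPP; intro Hn. apply Hnd. intros u Hu. apply NNPP; intro Hn2.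
    apply Hn; exists u; auto. }
  destruct (HSB u Hu) as [_ [Hstab _]].
  set (c := aa u) in *.
  set (Y' := map (fun y => psub y c) Y).
  set (x' := psub x c).
  assert (Hcl' : closure U (union (H u) (of_list Y')) x').
  { destruct (clos_mono U (union (droplet SB aa) (of_list Y))
      (fun z => union (H u) (of_list Y') (psub z c))) with (x := x) as [t Ht]; auto.
    - intros z [Dz|Yz]; [left; apply (Dz u Hu)|right].
      unfold of_list, Y'. apply in_map_iff; exists z; auto.
    - exists t. apply iter_trans; auto. }
  assert (Hnx' : ~ H u x') by exact Hnu.
  destruct Y as [|y00 Yr] eqn:EY.
  - exfalso. apply Hnx'. apply Hstab. revert Hcl'; apply clos_mono.
    intros z [Hz|[]]; auto.
  - rewrite <- EY in *.
    set (f := fun y : point => (Z.abs (fst y - fst x') + Z.abs (snd y - snd x'))%Z).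
    set (N := (zsum f Y' + 1)%Z).
    set (k := (a - 1 - length Y)%nat).
    set (pad := map (fun i => (fst x' + N + Z.of_nat i, snd x')%Z) (seq 0 k)).
    set (Zl := Y' ++ pad).
    assert (Hf0 : forall y, (0 <= f y)%Z) by (intro; unfold f; lia).
    assert (HfN : forall y, In y Y' -> (f y < N)%Z).
    { intros y Hy. pose proof (zsum_ge f Y' Hf0 y Hy). unfold N; lia. }
    assert (Hpad : forall p, In p pad -> exists i, p = (fst x' + N + Z.of_nat i, snd x')%Z).
    { intros p Hp. unfold pad in Hp. apply in_map_iff in Hp. destruct Hp as [i [<- _]]. eauto. }
    assert (HNDZ : NoDup Zl).
    { unfold Zl. apply NoDup_app.
      - unfold Y'. apply NoDup_map_NoDup_ForallPairs; auto.
        intros p q _ _ E. unfold psub in E. destruct p, q; simpl in E.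
        injection E; intros; f_equal; lia.
        rewrite <- EY; exact HND.
      - unfold pad. apply NoDup_map_NoDup_ForallPairs; [|apply seq_NoDup].
        intros i j _ _ E. injection E; intros; lia.
      - intros p Hp Hp2. destruct (Hpad p Hp2) as [i ->].
        specialize (HfN _ Hp). unfold f in HfN; simpl in HfN. lia. }
    assert (HlenZ : length Zl = (a - 1)%nat).
    { unfold Zl, pad, Y', k. rewrite length_app, length_map, length_map, length_seq. rewrite EY in Hlen |- *. lia. }
    assert (HclZ : closure U (union (H u) (of_list Zl)) x').
    { revert Hcl'; apply clos_mono. intros z [Hz|Hz]; [left; auto|right].
      unfold of_list, Zl. apply in_or_app; auto. }
    destruct (exists_min (pdist x') Zl) as [z [Hz Hmin]].
    { unfold Zl, Y'. simpl. discriminate. }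
    assert (Hd : pdist x' z <= rho).
    { apply Hrho. exists u, Zl, x'. repeat split; auto. exists z; auto. }
    assert (Hy0 : In (psub y00 c) Y') by (unfold Y'; left; auto).
    unfold Zl in Hz. apply in_app_or in Hz as [Hz|Hz].
    + unfold Y' in Hz. apply in_map_iff in Hz as [y [<- Hy]].
      exists y; split; [rewrite EY; exact Hy|]. unfold x' in Hd. rewrite pdist_trans in Hd. auto.
    + exists y00; split; [rewrite EY; left; auto|].
      rewrite <- (pdist_trans x y00 c). fold x'.
      apply Rle_trans with (pdist x' z); auto.
      destruct (Hpad z Hz) as [i ->].
      specialize (HfN _ Hy0). unfold f in HfN.
      unfold pdist; simpl. apply sq_le.
      set (dx := (fst x' - fst (psub y00 c))%Z) in *.
      set (dy := (snd x' - snd (psub y00 c))%Z) in *.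
      assert (Z.abs dx * Z.abs dx = dx * dx)%Z by (destruct (Z.abs_spec dx) as [[_ ->]|[_ ->]]; ring).
      assert (Z.abs dy * Z.abs dy = dy * dy)%Z by (destruct (Z.abs_spec dy) as [[_ ->]|[_ ->]]; ring).
      assert (Z.abs dx + Z.abs dy < N)%Z.
      { unfold dx, dy. lia. }
      assert (0 <= Z.abs dx)%Z by lia. assert (0 <= Z.abs dy)%Z by lia.
      replace (fst x' - (fst x' + N + Z.of_nat i))%Z with (- (N + Z.of_nat i))%Z by ring.
      replace (snd x' - snd x')%Z with 0%Z by ring.
      assert (Hs : ((Z.abs dx + Z.abs dy) * (Z.abs dx + Z.abs dy) <= (N + Z.of_nat i) * (N + Z.of_nat i))%Z) by (apply Z.mul_le_mono_nonneg; lia).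
      eapply Z.le_trans; [apply (far dx dy (N + Z.of_nat i)); lia|]. nia.
Qed.
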